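(* Let $\beta>1$ be the positive root of $\beta^2=a\beta+b$ with integers $a\ge b\ge 2$, and let $\mathbb Z_b=\{p/q: p,q\in\mathbb Z,\ \gcd(q,b)=1\}$. Then for all real $c<d$, \[ \overline{\mathbb Z_{\mathrm f}}=\overline{(\mathbb Z_b)_{\mathrm f}}=\overline{(\mathbb Z_b\cap[c,d])_{\mathrm f}}. \]
   Context: Let $K=\mathbb Q(\beta)$. $K_{\mathrm f}=\prod_{\mathfrak p\mid(\beta)}K_{\mathfrak p}$, the product over the prime ideals $\mathfrak p$ of the ring of integers of $K$ dividing the principal ideal $(\beta)$ of the completions $K_{\mathfrak p}$. For $x\in K$, $x_{\mathrm f}\in K_{\mathrm f}$ denotes its diagonal embedding, and for $S\subseteq K$, $\overline{S_{\mathrm f}}$ denotes the closure of $\{x_{\mathrm f}:x\in S\}$ in $K_{\mathrm f}$. *)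

(* Defs.v *)
From Stdlib Require Import Reals ZArith.
Open Scope R_scope.

(* K = Q(beta), realised concretely inside R via the real number beta
   (beta > 1 is the positive root of beta^2 = a beta + b). *)
Definition inK (beta x : R) : Prop :=
  exists p r q : Z, q <> 0%Z /\ x = (IZR p + IZR r * beta) / IZR q.

(* A normalized discrete valuation on K: v x is meaningful only for x in K,
   x <> 0 (v 0 = +infinity is handled separately below).
   By Ostrowski these are exactly the v_p for the nonzero primes p of O_K,
   and p | (beta) iff v beta > 0. *)
Definition is_dval (beta : R) (v : R -> Z) : Prop :=
  (forall x y, inK beta x -> inK beta y -> x <> 0 -> y <> 0 ->
     v (x * y) = Z.add (v x) (v y)) /\
  (forall x y, inK beta x -> inK beta y -> x <> 0 -> y <> 0 -> x + y <> 0 ->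
     Z.le (Z.min (v x) (v y)) (v (x + y))) /\
  (exists x, inK beta x /\ x <> 0 /\ v x = 1%Z).

(* x_f lies in the closure of S_f in K_f = prod_{p | (beta)} K_p
   (for x in K): every basic neighbourhood {z : v_p(z - x_f) >= N, all p|(beta)}
   meets S_f. *)
Definition in_closure_f (beta : R) (S : R -> Prop) (x : R) : Prop :=
  forall N : Z, exists y, S y /\
    forall v, is_dval beta v -> Z.lt 0 (v beta) ->
      x - y = 0 \/ Z.le N (v (x - y)).

(* closure(S_f) = closure(T_f) in K_f, for S, T subsets of K; in any
   topological space this is equivalent to S_f ⊆ cl(T_f) and T_f ⊆ cl(S_f). *)
Definition same_closure_f (beta : R) (S T : R -> Prop) : Prop :=
  (forall x, S x -> in_closure_f beta T x) /\
  (forall x, T x -> in_closure_f beta S x).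

Definition Zset (x : R) : Prop := exists n : Z, x = IZR n.

Definition Zb (b : Z) (x : R) : Prop :=
  exists p q : Z, q <> 0%Z /\ Z.gcd q b = 1%Z /\ x = IZR p / IZR q.

Definition Zb_interval (b : Z) (c d : R) (x : R) : Prop :=
  Zb b x /\ c <= x <= d.

(* Main.v *)
Require Import Defs.
From Stdlib Require Import Reals ZArith Znumtheory Zpow_facts Lia Lra.
Open Scope R_scope.

Definition Qr (x : R) : Prop := exists p q : Z, q <> 0%Z /\ x = IZR p / IZR q.

Lemma Qr_inK beta x : Qr x -> inK beta x.
Proof. intros (p & q & hq & ->). exists p, 0%Z, q. split; auto.
rewrite Rmult_0_l, Rplus_0_r; reflexivity. Qed.

Lemma Qr_Z n : Qr (IZR n).
Proof. exists n, 1%Z. split; [lia|]. unfold Rdiv; rewrite Rinv_1, Rmult_1_r; auto. Qed.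

Lemma Qr_mul x y : Qr x -> Qr y -> Qr (x * y).
Proof. intros (p1 & q1 & h1 & ->) (p2 & q2 & h2 & ->).
exists (p1*p2)%Z, (q1*q2)%Z. split; [lia|]. rewrite !mult_IZR.
field; split; apply not_0_IZR; auto. Qed.

Lemma Qr_inv x : Qr x -> Qr (/ x).
Proof. intros (p & q & h & ->). destruct (Z.eq_dec p 0) as [->|hp].
- unfold Rdiv; rewrite Rmult_0_l, Rinv_0. apply (Qr_Z 0).
- exists q, p. split; auto. field; split; apply not_0_IZR; auto. Qed.

Lemma Qr_pow x n : Qr x -> Qr (x ^ n).
Proof. intros h; induction n; simpl. apply (Qr_Z 1). apply Qr_mul; auto. Qed.


Lemma v1 beta v : is_dval beta v -> v 1 = 0%Z.
Proof. intros (hm & _ & _).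
pose proof (hm 1 1 (Qr_inK beta _ (Qr_Z 1)) (Qr_inK beta _ (Qr_Z 1)) R1_neq_R0 R1_neq_R0) as e.
rewrite Rmult_1_r in e. lia. Qed.

Lemma vmul beta v x y : is_dval beta v -> Qr x -> Qr y -> x <> 0 -> y <> 0 ->
  v (x * y) = (v x + v y)%Z.
Proof. intros (hm & _ & _) hx hy nx ny. apply hm; auto; apply Qr_inK; auto. Qed.

Lemma vadd beta v x y : is_dval beta v -> Qr x -> Qr y -> x <> 0 -> y <> 0 -> x + y <> 0 ->
  (Z.min (v x) (v y) <= v (x + y)%R)%Z.
Proof. intros (_ & ha & _) hx hy nx ny nxy. apply ha; auto; apply Qr_inK; auto. Qed.

Lemma vm1 beta v : is_dval beta v -> v (-1) = 0%Z.
Proof. intros H. pose proof (vmul beta v (-1) (-1) H (Qr_Z (-1)) (Qr_Z (-1))) as e.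
replace (-1 * -1) with 1 in e by ring. rewrite (v1 beta v H) in e.
assert (-1 <> 0) by lra. specialize (e H0 H0). lia. Qed.

Lemma vnat beta v n : is_dval beta v -> (0 <= v (INR (S n)))%Z.
Proof. intros H. induction n.
- simpl. rewrite (v1 beta v H); lia.
- rewrite S_INR. pose proof (vadd beta v (INR (S n)) 1 H) as e.
  rewrite INR_IZR_INZ in e, IHn |- *. rewrite (v1 beta v H) in e.
  assert (IZR (Z.of_nat (S n)) > 0) by (apply IZR_lt; lia).
  assert (IZR (Z.of_nat (S n)) + 1 <> 0) by lra.
  specialize (e (Qr_Z _) (Qr_Z 1) ltac:(lra) R1_neq_R0 H1). lia. Qed.

Lemma vint beta v n : is_dval beta v -> n <> 0%Z -> (0 <= v (IZR n))%Z.
Proof. intros H hn.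
assert (pos : forall m, (0 < m)%Z -> (0 <= v (IZR m))%Z).
{ intros m hm. destruct (Z.to_nat m) eqn:E. lia.
  replace (IZR m) with (INR (S n0)). apply (vnat beta); auto.
  rewrite INR_IZR_INZ, <- E. f_equal. lia. }
destruct (Z_lt_le_dec 0 n). auto.
replace (IZR n) with (-1 * IZR (- n)) by (rewrite opp_IZR; ring).
assert (hm1 : -1 <> 0) by lra. assert (hnn : (-n <> 0)%Z) by lia.
rewrite (vmul beta v (-1) (IZR (-n)) H (Qr_Z (-1)) (Qr_Z _) hm1 (not_0_IZR _ hnn)).
rewrite (vm1 beta v H). specialize (pos (-n)%Z). lia. Qed.

Lemma vinv beta v x : is_dval beta v -> Qr x -> x <> 0 -> v (/ x) = (- v x)%Z.
Proof. intros H hx nx. pose proof (vmul beta v x (/x) H hx (Qr_inv _ hx) nx (Rinv_neq_0_compat _ nx)) as e.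
rewrite Rinv_r in e; auto. rewrite (v1 beta v H) in e. lia. Qed.

Lemma vpow beta v x n : is_dval beta v -> Qr x -> x <> 0 -> v (x ^ n) = (Z.of_nat n * v x)%Z.
Proof. intros H hx nx. induction n.
- simpl. rewrite (v1 beta v H); lia.
- change (x ^ S n) with (x * x ^ n). rewrite Nat2Z.inj_succ.
  rewrite (vmul beta v); auto. rewrite IHn. lia. apply Qr_pow; auto. apply pow_nonzero; auto. Qed.

Lemma vcop beta v b m u w : is_dval beta v -> (u*m + w*b = 1)%Z -> (1 <= v (IZR b))%Z ->
  b <> 0%Z -> m <> 0%Z -> v (IZR m) = 0%Z.
Proof. intros H e hb nb nm. pose proof (vint beta v m H nm).
destruct (Z.eq_dec (v (IZR m)) 0) as [|hne]; auto. exfalso.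
destruct (Z.eq_dec u 0) as [->|nu].
- assert (w <> 0%Z) by lia.
  assert (e2: IZR w * IZR b = 1) by (rewrite <- mult_IZR; f_equal; lia).
  pose proof (vmul beta v (IZR w) (IZR b) H (Qr_Z _) (Qr_Z _) (not_0_IZR _ H1) (not_0_IZR _ nb)).
  rewrite e2, (v1 beta v H) in H2. pose proof (vint beta v w H H1). lia.
- destruct (Z.eq_dec w 0) as [->|nw].
  + assert (e2: IZR u * IZR m = 1) by (rewrite <- mult_IZR; f_equal; lia).
    pose proof (vmul beta v (IZR u) (IZR m) H (Qr_Z _) (Qr_Z _) (not_0_IZR _ nu) (not_0_IZR _ nm)).
    rewrite e2, (v1 beta v H) in H1. pose proof (vint beta v u H nu). lia.
  + assert (e2: IZR (u*m) + IZR (w*b) = 1) by (rewrite <- plus_IZR; f_equal; lia).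
    assert (n1 : (u*m <> 0)%Z) by (apply Z.neq_mul_0; auto).
    assert (n2 : (w*b <> 0)%Z) by (apply Z.neq_mul_0; auto).
    pose proof (vadd beta v (IZR (u*m)) (IZR (w*b)) H (Qr_Z _) (Qr_Z _)
      (not_0_IZR _ n1) (not_0_IZR _ n2)) as h.
    rewrite e2, (v1 beta v H) in h. specialize (h R1_neq_R0).
    rewrite !mult_IZR in h. rewrite (vmul beta v (IZR u) (IZR m) H (Qr_Z _) (Qr_Z _) (not_0_IZR _ nu) (not_0_IZR _ nm)) in h.
    rewrite (vmul beta v (IZR w) (IZR b) H (Qr_Z _) (Qr_Z _) (not_0_IZR _ nw) (not_0_IZR _ nb)) in h.
    pose proof (vint beta v u H nu). pose proof (vint beta v w H nw). lia. Qed.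

Lemma vkey beta v b k m u w N : is_dval beta v -> (u*m + w*b = 1)%Z -> (1 <= v (IZR b))%Z ->
  b <> 0%Z -> m <> 0%Z -> k <> 0%Z ->
  (Z.of_nat N <= v (IZR k * IZR b ^ N / IZR m)%R)%Z.
Proof. intros H e hb nb nm nk. unfold Rdiv.
assert (IZR b ^ N <> 0) by (apply pow_nonzero, not_0_IZR; auto).
rewrite (vmul beta v); try apply Qr_mul; try apply Qr_pow; try apply Qr_inv; try apply Qr_Z.
rewrite (vmul beta v); try apply Qr_pow; try apply Qr_Z.
rewrite (vinv beta v); try apply Qr_Z. rewrite (vpow beta v); try apply Qr_Z.
rewrite (vcop beta v b m u w); auto. pose proof (vint beta v k H nk). nia.
all: try apply not_0_IZR; auto. all: try apply Rmult_integral_contrapositive_currified; auto.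
all: try apply not_0_IZR; auto. apply Rinv_neq_0_compat, not_0_IZR; auto. Qed.

Lemma vb a b beta v : is_dval beta v -> (2 <= b)%Z -> (b <= a)%Z ->
  beta ^ 2 = IZR a * beta + IZR b -> (0 < v beta)%Z -> (1 <= v (IZR b))%Z.
Proof. intros H hb hab hbeta hv. pose proof H as [hm [ha _]].
assert (e : beta * (beta - IZR a) = IZR b) by (replace (IZR b) with (beta^2 - IZR a * beta) by (rewrite hbeta; ring); ring).
assert (kb : inK beta beta) by (exists 0%Z, 1%Z, 1%Z; split; [lia|]; field).
assert (ka : inK beta (beta - IZR a)) by (exists (-a)%Z, 1%Z, 1%Z; split; [lia|]; rewrite opp_IZR; field).
assert (nb : IZR b <> 0) by (apply not_0_IZR; lia).
assert (n1 : beta <> 0) by (intro h0; apply nb; rewrite <- e, h0; ring).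
assert (n2 : beta - IZR a <> 0) by (intro h0; apply nb; rewrite <- e, h0; ring).
pose proof (hm _ _ kb ka n1 n2) as e2. rewrite e in e2.
assert (na : IZR (-a) <> 0) by (apply not_0_IZR; lia).
pose proof (ha beta (IZR (-a)) kb (Qr_inK _ _ (Qr_Z _)) n1 na) as h.
rewrite opp_IZR in h. specialize (h n2).
assert (0 <= v (IZR (-a)))%Z by (apply (vint beta v); auto; lia).
rewrite opp_IZR in H0. unfold Rminus in e2. lia. Qed.

Lemma pow_ge B n : 2 <= B -> INR n + 1 <= B ^ n.
Proof. intros hB. induction n. simpl; lra. rewrite S_INR. simpl.
pose proof (pos_INR n). nra. Qed.

Lemma gcd_bez q b : Z.gcd q b = 1%Z -> exists u w, (u*q + w*b = 1)%Z.
Proof. intros h. apply Zgcd_1_rel_prime, rel_prime_bezout in h. destruct h as [u w e].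
exists u, w; lia. Qed.

Lemma bez_gcd q b u w : (u*q + w*b = 1)%Z -> Z.gcd q b = 1%Z.
Proof. intros e. apply Zgcd_1_rel_prime, bezout_rel_prime. exists u w. lia. Qed.

Theorem lemma3 (a b : Z) (beta c d : R)
  (hb : (2 <= b)%Z) (hab : (b <= a)%Z)
  (hbeta1 : 1 < beta) (hbeta : beta ^ 2 = IZR a * beta + IZR b)
  (hcd : c < d) :
  same_closure_f beta Zset (Zb b) /\
  same_closure_f beta (Zb b) (Zb_interval b c d).
Proof.
assert (nb : b <> 0%Z) by lia.
split; split.
- intros x [n ->] N. exists (IZR n). split.
  + exists n, 1%Z. split; [lia|]. split. apply Z.gcd_1_l. unfold Rdiv; rewrite Rinv_1, Rmult_1_r; auto.
  + intros; left; ring.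
- intros x (p & q & hq & hg & ->) N.
  set (M := Z.to_nat N).
  assert (hr : rel_prime q (b ^ Z.of_nat M)).
  { apply rel_prime_Zpower_r. lia. apply Zgcd_1_rel_prime; auto. }
  apply rel_prime_bezout in hr. destruct hr as [u w e].
  destruct (gcd_bez q b hg) as (u0 & w0 & e0).
  exists (IZR (p*u)). split. exists (p*u)%Z; auto.
  intros v hv hvb.
  assert (E : IZR p / IZR q - IZR (p*u) = IZR (p*w) * IZR b ^ M / IZR q).
  { assert (e' : IZR u * IZR q + IZR w * IZR b ^ M = 1).
    { rewrite pow_IZR, <- !mult_IZR, <- plus_IZR. f_equal. exact e. }
    rewrite !mult_IZR. field_simplify_eq. 2: apply not_0_IZR; auto.
    transitivity (IZR p * (1 - IZR u * IZR q)); [ring|rewrite <- e'; ring]. }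
  rewrite E. destruct (Z.eq_dec (p*w) 0) as [h0|h0].
  + left. rewrite h0. unfold Rdiv. ring.
  + right. pose proof (vkey beta v b (p*w) q u0 w0 M hv e0 (vb a b beta v hv hb hab hbeta hvb) nb hq h0).
    lia.
- intros x (p & q & hq & hg & ->) N.
  set (M := Z.to_nat N).
  set (x := IZR p / IZR q).
  set (r := IZR b ^ M / (d - c)).
  set (K := Z.to_nat (up r)).
  assert (hK : r <= INR K).
  { pose proof (archimed r) as [h1 _]. rewrite INR_IZR_INZ.
    assert (up r <= Z.of_nat K)%Z by (unfold K; lia). apply IZR_le in H. lra. }
  set (D := (b ^ Z.of_nat (S K) + 1)%Z).
  assert (hD : IZR D = IZR b ^ (S K) + 1).
  { unfold D. rewrite plus_IZR, pow_IZR. reflexivity. }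
  assert (hb2 : 2 <= IZR b) by (apply IZR_le; auto).
  pose proof (pow_ge (IZR b) (S K) hb2) as hpK. rewrite S_INR in hpK.
  assert (hbM : 0 < IZR b ^ M) by (apply pow_lt; lra).
  assert (hr0 : 0 < r) by (unfold r; apply Rdiv_lt_0_compat; lra).
  assert (hDr : r < IZR D) by lra.
  assert (nD : IZR D <> 0) by lra.
  set (s := IZR b ^ M / IZR D).
  assert (hs0 : 0 < s) by (unfold s; apply Rdiv_lt_0_compat; lra).
  assert (hs : s < d - c).
  { unfold s. apply (Rmult_lt_reg_r (IZR D)). lra.
    unfold Rdiv; rewrite Rmult_assoc, Rinv_l, Rmult_1_r; auto.
    unfold r in hDr. apply (Rmult_lt_compat_l (d - c)) in hDr; [|lra].
    unfold Rdiv in hDr. rewrite <- Rmult_assoc, (Rmult_comm (d-c)), Rmult_assoc, Rinv_r, Rmult_1_r in hDr; lra. }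
  set (n := up ((c - x) / s)).
  pose proof (archimed ((c - x) / s)) as [a1 a2]. fold n in a1, a2.
  assert (h1 : c - x < IZR n * s).
  { replace (c - x) with ((c - x) / s * s) by (field; lra). nra. }
  assert (h2 : IZR n * s <= c - x + s).
  { replace (c - x) with ((c - x) / s * s) by (field; lra). nra. }
  assert (bD : (1 * D + (- b ^ Z.of_nat K) * b = 1)%Z).
  { unfold D. rewrite Nat2Z.inj_succ, Z.pow_succ_r by lia. ring. }
  exists (x + IZR n * s). split.
  + split.
    * destruct (gcd_bez q b hg) as (u0 & w0 & e0).
      exists (p * D + n * b ^ Z.of_nat M * q)%Z, (q * D)%Z. split.
      { apply Z.neq_mul_0; split; auto. intro h; apply nD; rewrite h; reflexivity. }
      split.
      { apply (bez_gcd _ _ u0 (w0 * D - u0 * q * b ^ Z.of_nat K - w0 * b * b ^ Z.of_nat K)).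
        transitivity ((u0*q + w0*b) * (1 * D + (- b ^ Z.of_nat K) * b))%Z. ring.
        rewrite e0, bD. reflexivity. }
      unfold x, s. rewrite plus_IZR, !mult_IZR, <- pow_IZR. field. split; auto. apply not_0_IZR; auto.
    * lra.
  + intros v hv hvb.
    replace (x - (x + IZR n * s)) with (IZR (- n) * IZR b ^ M / IZR D)
      by (unfold s; rewrite opp_IZR; field; auto).
    destruct (Z.eq_dec n 0) as [h0|h0].
    * left. rewrite h0. unfold Rdiv. simpl. ring.
    * right. assert (hD0 : D <> 0%Z) by (intro h; apply nD; rewrite h; reflexivity). assert (hn0 : (- n <> 0)%Z) by lia.
      pose proof (vkey beta v b (- n) D 1 (- b ^ Z.of_nat K) M hv bD
        (vb a b beta v hv hb hab hbeta hvb) nb hD0 hn0). lia.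
- intros x [hx _] N. exists x. split. exact hx. intros; left; ring.
Qed.
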